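(* Let $\mathfrak{q}_0$ be the space form vector of the Euclidean plane (the vector representing the point $\infty$), and let $G=(g^{(1)},g^{(2)},\dots)$ be a planar circular net of $(M)$-type, consecutive curves forming Ribaucour pairs of $(\mathfrak{m}^{(j,j+1)})$-type. Then lifted-foldings of $G$ (canonically embedded in 3-space) produce circular nets whose curves lie in Euclidean planes if and only if $\langle\mathfrak{m}^{(j,j+1)},\mathfrak{q}_0\rangle=0$ for all $j$.
   Context: Planar light cone model: $\mathbb{R}^{3,2}$ with form of signature $(3,2)$ (coordinates with signs $+,+,+,-,-$), light cone $\mathcal{L}$; $\mathfrak{p}=(0,0,0,0,1)$; point $(x,y)\leftrightarrow(x,y,\frac12(1-x^2-y^2),\frac12(1+x^2+y^2),0)$, $\infty\leftrightarrow\mathfrak{q}_0=(0,0,1,-1,0)$; other elements of $\mathbb{P}(\mathcal{L})$ are oriented circles and lines (lines are those orthogonal to $\mathfrak{q}_0$); incidence = orthogonality. Inversion in $\mathfrak{a}$: $\sigma_a(x)=x-\frac{2\langle x,\mathfrak{a}\rangle}{\langle\mathfrak{a},\mathfrak{a}\rangle}\mathfrak{a}$. Ribaucour pair of curves: quadrilaterals $f_i,f_j,g_j,g_i$ concircular; R-evolution map: M-inversions in $\mathfrak{f}_i-\mathfrak{f}_j=\mathfrak{g}_i-\mathfrak{g}_j$ for suitable representatives; $(\mathfrak{m})$-type if $\mathrm{span}\{\mathfrak{m},\mathfrak{p}\}$ is 2-dimensional and fixed by all these inversions. A planar circular net of $(M)$-type is a sequence of planar curves with consecutive pairs of $(\mathfrak{m}^{(j,j+1)})$-type.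 Canonical embedding $\iota:\mathbb{R}^{3,2}\to\mathbb{R}^{4,2}$, $(x_1,\dots,x_5)\mapsto(x_1,x_2,0,x_3,x_4,x_5)$, places the net in the $xy$-plane of $\mathbb{R}^3$ (circles become spheres orthogonal to that plane). Lifted-folding of such a net: successively applying to the curves (composed) M-inversions in complexes $\mathfrak{n}=\mathfrak{m}^1+\tilde\lambda\mathfrak{m}^2+\langle\mathfrak{m}^1+\tilde\lambda\mathfrak{m}^2,\mathfrak{p}\rangle\mathfrak{p}$, $\tilde\lambda\in\mathbb{R}$, where $\mathfrak{m}^1$ represents the plane and $\mathfrak{m}^2=\iota(\mathfrak{m}^{(j,j+1)})$ (transported by previously applied inversions); the result is a circular net whose curves lie on spheres. *)

(* Defs.v *)
From HB Require Import structures.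
From mathcomp Require Import all_boot all_order all_algebra.
Set Implicit Arguments. Unset Strict Implicit. Unset Printing Implicit Defensive.
Import Order.TTheory GRing.Theory Num.Theory.
Local Open Scope ring_scope.

Section Model.
Variable R : realFieldType.

Definition lip (n k : nat) (x y : 'rV[R]_n) : R :=
  \sum_(i < n) (if (i < k)%N then 1 else -1) * x ord0 i * y ord0 i.

Definition ip5 (x y : 'rV[R]_5) : R := lip 3 x y.
Definition ip6 (x y : 'rV[R]_6) : R := lip 4 x y.

Definition mkv (n : nat) (s : seq R) : 'rV[R]_n := \row_(i < n) s`_i.

(* point-sphere complex p and space form vector q0 (the point infinity) *)
Definition p5 : 'rV[R]_5 := mkv 5 [:: 0; 0; 0; 0; 1].
Definition q0 : 'rV[R]_5 := mkv 5 [:: 0; 0; 1; -1; 0].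

Definition pt5 (x y : R) : 'rV[R]_5 :=
  mkv 5 [:: x; y; (1 - x ^+ 2 - y ^+ 2) / 2; (1 + x ^+ 2 + y ^+ 2) / 2; 0].

Definition inversion (n k : nat) (a x : 'rV[R]_n) : 'rV[R]_n :=
  x - ((2 * lip k x a) / lip k a a) *: a.
Definition sigma5 := @inversion 5 3.
Definition sigma6 := @inversion 6 4.

(* representative of a (finite) point of the Euclidean plane:
   isotropic, incident with p (i.e. orthogonal to p), not infinity *)
Definition is_point (x : 'rV[R]_5) : Prop :=
  ip5 x x = 0 /\ ip5 x p5 = 0 /\ ip5 x q0 != 0.

Definition is_circle (c : 'rV[R]_5) : Prop := ip5 c c = 0 /\ ip5 c p5 != 0.

Definition concircular (a b c d : 'rV[R]_5) : Prop :=
  exists k, is_circle k /\ ip5 k a = 0 /\ ip5 k b = 0 /\ ip5 k c = 0 /\ ip5 k d = 0.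

Definition planar_curve (f : nat -> 'rV[R]_5) : Prop := forall i, is_point (f i).

Definition ribaucour_pair (f g : nat -> 'rV[R]_5) : Prop :=
  forall i, concircular (f i) (f i.+1) (g i.+1) (g i).

Definition r_evolution (f g : nat -> 'rV[R]_5) (a : nat -> 'rV[R]_5) : Prop :=
  forall i, ip5 (a i) (a i) != 0 /\
    exists s1 s2 t1 t2 : R, [/\ s1 != 0, s2 != 0, t1 != 0 & t2 != 0] /\
      a i = s1 *: f i - s2 *: f i.+1 /\ a i = t1 *: g i - t2 *: g i.+1.

Definition span_mp (m : 'rV[R]_5) : 'M[R]_(1 + 1, 5) := col_mx m p5.

Definition ribaucour_mtype (f g : nat -> 'rV[R]_5) (m : 'rV[R]_5) : Prop :=
  ribaucour_pair f g /\ \rank (span_mp m) = 2%N /\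
  exists a, r_evolution f g a /\
    forall i (v : 'rV[R]_5), (v <= span_mp m)%MS -> (sigma5 (a i) v <= span_mp m)%MS.

Definition planar_net_Mtype (G : nat -> nat -> 'rV[R]_5) (m : nat -> 'rV[R]_5) : Prop :=
  (forall j, planar_curve (G j)) /\ (forall j, ribaucour_mtype (G j) (G j.+1) (m j)).

Definition iota (x : 'rV[R]_5) : 'rV[R]_6 :=
  mkv 6 [:: x ord0 0; x ord0 1; 0; x ord0 2; x ord0 3; x ord0 4].

Definition p6 : 'rV[R]_6 := iota p5.
Definition q6 : 'rV[R]_6 := iota q0.

(* m^1: the (oriented) plane z = 0 of R^3 *)
Definition m1 : 'rV[R]_6 := mkv 6 [:: 0; 0; 1; 0; 0; 1].

Definition mproj (v : 'rV[R]_6) : 'rV[R]_6 := v + ip6 v p6 *: p6.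

Fixpoint fold_map (m : nat -> 'rV[R]_5) (lam : nat -> R) (j : nat) : 'rV[R]_6 -> 'rV[R]_6 :=
  match j with
  | 0 => id
  | j'.+1 =>
      let T := fold_map m lam j' in
      let n := mproj (T m1 + lam j' *: T (iota (m j'))) in
      fun x => sigma6 n (T x)
  end.

Definition fold_complex (m : nat -> 'rV[R]_5) (lam : nat -> R) (j : nat) : 'rV[R]_6 :=
  mproj (fold_map m lam j m1 + lam j *: fold_map m lam j (iota (m j))).

Definition lifted_folding_ok (m : nat -> 'rV[R]_5) (lam : nat -> R) : Prop :=
  forall j, ip6 (fold_complex m lam j) (fold_complex m lam j) != 0.

Definition lifted_curve (G : nat -> nat -> 'rV[R]_5) (m : nat -> 'rV[R]_5)
  (lam : nat -> R) (j i : nat) : 'rV[R]_6 := fold_map m lam j (iota (G j i)).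

(* the sphere on which the j-th lifted curve lies (image of the plane m^1) *)
Definition carrier_sphere (m : nat -> 'rV[R]_5) (lam : nat -> R) (j : nat) : 'rV[R]_6 :=
  fold_map m lam j m1.

(* an (oriented) sphere of R^3 is a Euclidean plane iff it contains infinity *)
Definition is_euclidean_plane (s : 'rV[R]_6) : Prop := ip6 s q6 = 0.

End Model.

(* Main.v *)
Require Import Defs.
From mathcomp Require Import all_boot all_order all_algebra ring.
Import GRing.Theory Num.Theory.
Local Open Scope ring_scope.
Section S.
Variable R : realFieldType.
Implicit Types (m : nat -> 'rV[R]_5) (lam : nat -> R) (v : 'rV[R]_6).
Lemma lipDl n k (x y z : 'rV[R]_n) : lip k (x + y) z = lip k x z + lip k y z.
Proof. rewrite /lip -big_split; apply: eq_bigr => i _; rewrite /= !mxE; ring. Qed.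
Lemma lipZl n k a (x z : 'rV[R]_n) : lip k (a *: x) z = a * lip k x z.
Proof. rewrite /lip mulr_sumr; apply: eq_bigr => i _; rewrite !mxE; ring. Qed.
Lemma lipC n k (x y : 'rV[R]_n) : lip k x y = lip k y x.
Proof. rewrite /lip; apply: eq_bigr => i _; ring. Qed.
Lemma lipNl n k (x z : 'rV[R]_n) : lip k (- x) z = - lip k x z.
Proof. by rewrite -scaleN1r lipZl mulN1r. Qed.
Lemma lipDr n k (x y z : 'rV[R]_n) : lip k z (x + y) = lip k z x + lip k z y.
Proof. by rewrite lipC lipDl !(lipC _ _ z). Qed.
Lemma lipZr n k a (x z : 'rV[R]_n) : lip k z (a *: x) = a * lip k z x.
Proof. by rewrite lipC lipZl lipC. Qed.
Lemma lipNr n k (x z : 'rV[R]_n) : lip k z (- x) = - lip k z x.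
Proof. by rewrite lipC lipNl lipC. Qed.
Lemma inv_iso n k (a x y : 'rV[R]_n) : lip k (inversion k a x) (inversion k a y) = lip k x y.
Proof.
rewrite /inversion !(lipDl, lipDr, lipNl, lipNr, lipZl, lipZr).
have [->|h] := eqVneq (lip k a a) 0; first by rewrite invr0 !mulr0 !mul0r; ring.
rewrite (lipC _ _ a y); field; exact: h. Qed.
Lemma row5E (x : 'rV[R]_5) : exists a0 a1 a2 a3 a4, x = mkv 5 [:: a0; a1; a2; a3; a4].
Proof.
exists (x ord0 0), (x ord0 1), (x ord0 2), (x ord0 3), (x ord0 4).
apply/rowP => i; rewrite !mxE; case: i => [[|[|[|[|[|?]]]]] Hi] //=; congr (x ord0 _); exact: val_inj.
Qed.
Lemma iota_iso (x y : 'rV[R]_5) : ip6 (Defs.iota x) (Defs.iota y) = ip5 x y.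
Proof.
have [a0 [a1 [a2 [a3 [a4 ->]]]]] := row5E x.
have [b0 [b1 [b2 [b3 [b4 ->]]]]] := row5E y.
rewrite /ip6 /ip5 /lip !big_ord_recr !big_ord0 /= !mxE /=; ring.
Qed.
Lemma m1_iota (x : 'rV[R]_5) : ip6 (m1 R) (Defs.iota x) = ip5 x (p5 R).
Proof.
have [a0 [a1 [a2 [a3 [a4 ->]]]]] := row5E x.
rewrite /ip6 /ip5 /lip !big_ord_recr !big_ord0 /= !mxE /=; ring.
Qed.
Lemma m1m1 : ip6 (m1 R) (m1 R) = 0.
Proof. rewrite /ip6 /lip !big_ord_recr !big_ord0 /= !mxE /=; ring. Qed.
Lemma m1p6 : ip6 (m1 R) (p6 R) = -1.
Proof. rewrite /ip6 /lip !big_ord_recr !big_ord0 /= !mxE /=; ring. Qed.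
Lemma m1q6 : ip6 (m1 R) (q6 R) = 0.
Proof. rewrite /ip6 /lip !big_ord_recr !big_ord0 /= !mxE /=; ring. Qed.
Lemma p6p6 : ip6 (p6 R) (p6 R) = -1.
Proof. rewrite /ip6 /lip !big_ord_recr !big_ord0 /= !mxE /=; ring. Qed.
Lemma p6q6 : ip6 (p6 R) (q6 R) = 0.
Proof. rewrite /ip6 /lip !big_ord_recr !big_ord0 /= !mxE /=; ring. Qed.
Lemma ip6Dl (x y z : 'rV[R]_6) : ip6 (x + y) z = ip6 x z + ip6 y z. Proof. exact: lipDl. Qed.
Lemma ip6Dr (x y z : 'rV[R]_6) : ip6 z (x + y) = ip6 z x + ip6 z y. Proof. exact: lipDr. Qed.
Lemma ip6Zl a (x z : 'rV[R]_6) : ip6 (a *: x) z = a * ip6 x z. Proof. exact: lipZl. Qed.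
Lemma ip6Zr a (x z : 'rV[R]_6) : ip6 z (a *: x) = a * ip6 z x. Proof. exact: lipZr. Qed.
Lemma ip6C (x y : 'rV[R]_6) : ip6 x y = ip6 y x.
Proof. exact: lipC. Qed.
Notation ipl := (ip6Dl, ip6Dr, ip6Zl, ip6Zr).
Lemma sigma6_iso a x y : ip6 (sigma6 a x) (sigma6 a y) = ip6 x (y : 'rV[R]_6).
Proof. exact: inv_iso. Qed.
Lemma fold_iso m lam j (x y : 'rV[R]_6) : ip6 (fold_map m lam j x) (fold_map m lam j y) = ip6 x y.
Proof. elim: j => [//|j IH] /=; by rewrite sigma6_iso IH. Qed.
Lemma sigma6_fix (a x : 'rV[R]_6) : ip6 x a = 0 -> sigma6 a x = x.
Proof. by move=> h; rewrite /sigma6 /inversion -/(@ip6 R x a) h mulr0 mul0r scale0r subr0. Qed.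
Lemma mproj_p6 v : ip6 (p6 R) (mproj v) = 0.
Proof. rewrite /mproj !ipl p6p6 (ip6C (p6 R) v); ring. Qed.
Lemma fold_p6 m lam j : fold_map m lam j (p6 R) = p6 R.
Proof. elim: j => [//|j IH] /=; by rewrite IH sigma6_fix // mproj_p6. Qed.
Lemma nq6 m lam j : fold_map m lam j (q6 R) = q6 R ->
  ip6 (q6 R) (fold_complex m lam j) = lam j * ip5 (m j) (q0 R).
Proof.
move=> hq; rewrite /fold_complex /mproj !ipl.
rewrite -{1 2}hq !fold_iso (ip6C _ (m1 R)) m1q6 (ip6C (q6 R) (p6 R)) p6q6 ip6C -iota_iso; ring.
Qed.
Lemma fold_q6 m lam j : (forall j', (j' < j)%N -> lam j' * ip5 (m j') (q0 R) = 0) ->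
  fold_map m lam j (q6 R) = q6 R.
Proof.
elim: j => [//|j IH] h /=.
have hq : fold_map m lam j (q6 R) = q6 R by apply: IH => j' hj; apply: h; exact: ltnW.
rewrite hq sigma6_fix //.
have := @nq6 m lam j hq; rewrite /fold_complex ip6C => ->; exact: h.
Qed.
Lemma fold_isop m lam j (x : 'rV[R]_6) : ip6 (fold_map m lam j x) (p6 R) = ip6 x (p6 R).
Proof. by rewrite -{1}(fold_p6 m lam j) fold_iso. Qed.
Lemma iota_p6 (x : 'rV[R]_5) : ip6 (Defs.iota x) (p6 R) = ip5 x (p5 R).
Proof. exact: iota_iso. Qed.
Ltac simp6 := rewrite ?(ip6C (p6 R) (fold_map _ _ _ _)) ?fold_isop ?fold_iso ?p6p6 ?m1m1 ?m1p6;
  rewrite ?(ip6C (p6 R) (m1 R)) ?(ip6C (p6 R) (Defs.iota _)) ?(ip6C (Defs.iota _) (m1 R));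
  rewrite ?m1p6 ?iota_p6 ?m1_iota ?iota_iso.
Lemma nn m lam j : ip6 (fold_complex m lam j) (fold_complex m lam j) =
   1 + lam j ^+ 2 * (ip5 (m j) (p5 R) ^+ 2 + ip5 (m j) (m j)).
Proof. rewrite /fold_complex /mproj !ipl; simp6; ring. Qed.
Lemma m1n m lam j : ip6 (fold_map m lam j (m1 R)) (fold_complex m lam j) = 1.
Proof. rewrite /fold_complex /mproj !ipl; simp6; ring. Qed.
Lemma ip6Nl (x z : 'rV[R]_6) : ip6 (- x) z = - ip6 x z. Proof. exact: lipNl. Qed.
Lemma step m lam j : fold_map m lam j (q6 R) = q6 R ->
  ip6 (fold_map m lam j.+1 (m1 R)) (q6 R) =
  - (2 * 1 / (1 + lam j ^+ 2 * (ip5 (m j) (p5 R) ^+ 2 + ip5 (m j) (m j)))) *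
    (lam j * ip5 (m j) (q0 R)).
Proof.
move=> hq.
rewrite [fold_map _ _ j.+1 _]/= -/(fold_complex m lam j) /sigma6 /inversion.
have E1 := m1n m lam j; have E2 := nn m lam j; rewrite /ip6 in E1 E2.
rewrite -/(@ip6 R) ip6Dl ip6Nl ip6Zl E1 E2 (ip6C (fold_complex m lam j)) nq6 //.
by rewrite -hq fold_iso m1q6 add0r mulNr.
Qed.
Lemma main m : ((forall lam : nat -> R, lifted_folding_ok m lam ->
      forall j, is_euclidean_plane (carrier_sphere m lam j))
   <-> (forall j, ip5 (m j) (q0 R) = 0)).
Proof.
split; last first.
  move=> h lam _ j; rewrite /is_euclidean_plane /carrier_sphere.
  rewrite -(@fold_q6 m lam j) ?fold_iso ?m1q6 // => j' _; by rewrite h mulr0.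
move=> H j; case: (eqVneq (ip5 (m j) (q0 R)) 0) => // hne; exfalso.
set K := ip5 (m j) (p5 R) ^+ 2 + ip5 (m j) (m j).
pose t : R := if 1 + K == 0 then 2 else 1.
have ht0 : t != 0.
  by rewrite /t; case: ifP => _; [rewrite pnatr_eq0 | rewrite oner_eq0].
have hN : 1 + t ^+ 2 * K != 0.
  rewrite /t; case: ifP => [/eqP hK|/negbT hK]; last by rewrite expr1n mul1r.
  have -> : K = -1 by apply: (addrI 1); rewrite hK; ring.
  apply/eqP => h0; have : (3 : R) = 0 by rewrite -oppr0 -h0; ring.
  by move/eqP; rewrite pnatr_eq0.
pose lam := fun k => if k == j then t else 0.
have ok : lifted_folding_ok m lam.
  move=> k; rewrite nn /lam; case: ifP => [/eqP ->|_]; first exact: hN.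
  by rewrite expr2 !mul0r addr0 oner_eq0.
have := H lam ok j.+1.
rewrite /is_euclidean_plane /carrier_sphere step.
  rewrite /lam eqxx -/K => /eqP.
  rewrite mulNr oppr_eq0 !mulf_eq0 invr_eq0 pnatr_eq0 oner_eq0 (negPf hN) (negPf ht0) (negPf hne) /=.
  by [].
apply: fold_q6 => j' hj; rewrite /lam; case: ifP => [/eqP e|_]; last by rewrite mul0r.
by rewrite e ltnn in hj.
Qed.
End S.
Theorem corollary2p11 (R : realFieldType)
    (G : nat -> nat -> 'rV[R]_5) (m : nat -> 'rV[R]_5) :
  planar_net_Mtype G m ->
  ((forall lam : nat -> R, lifted_folding_ok m lam ->
      forall j, is_euclidean_plane (carrier_sphere m lam j))
   <-> (forall j, ip5 (m j) (q0 R) = 0)).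
Proof. by move=> _; exact: main. Qed.
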